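(* Let $S$ be an irreducible $\mathcal{C}$-semigroup with Frobenius vector $\mathbf f$, and let $\mathbf x\in I_S(\mathbf f)$ be a minimal generator of $S$ such that (1) $2\mathbf x-\mathbf f\notin S$, (2) $3\mathbf x\neq 2\mathbf f$, and (3) $4\mathbf x\neq 3\mathbf f$. Then $S'=(S\setminus\{\mathbf x\})\cup\{\mathbf f-\mathbf x\}$ is an irreducible $\mathcal{C}$-semigroup with Frobenius vector $\mathbf f$.
   Context: An integer cone $\mathcal{C}\subseteq\mathbb{N}^p$ is the set of integer points of a finitely generated rational cone in $\mathbb{Q}_{\ge0}^p$. A $\mathcal{C}$-semigroup is a subset $S\subseteq\mathcal{C}$ containing $0$, closed under addition, with $\mathcal{C}\setminus S$ finite; $\mathcal{H}(S)=\mathcal{C}\setminus S$. A minimal generator of $S$ is an element of its (unique) minimal generating set, i.e. a nonzero element of $S$ not expressible as a sum of two nonzero elements of $S$. A monomial order $\preceq$ on $\mathbb{N}^p$ is fixed (total order, compatible with addition, $\mathbf 0\preceq\mathbf c$ for all $\mathbf c$); the Frobenius vector is $F(S)=\max_\preceq\mathcal{H}(S)$. $\mathrm{PF}(S)=\{\mathbf y\in\mathcal{H}(S)\mid\mathbf y+(S\setminus\{0\})\subseteq S\}$; $S$ is irreducible if $\mathrm{PF}(S)=\{F(S)\}$ or $\mathrm{PF}(S)=\{F(S),F(S)/2\}$. $\mathbf x\le_{\mathcal{C}}\mathbf y$ means $\mathbf y-\mathbf x\in\mathcal{C}$, and $I_S(\mathbf n)=\{\mathbf s\in S\mid \mathbf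 s\le_{\mathcal{C}}\mathbf n\}$. The condition $2\mathbf x-\mathbf f\notin S$ is understood in $\mathbb{Z}^p$ (it holds in particular when $2\mathbf x-\mathbf f\notin\mathbb{N}^p$). *)

(* Defs.v *)
From HB Require Import structures.
From mathcomp Require Import all_boot all_order all_algebra.
Set Implicit Arguments. Unset Strict Implicit. Unset Printing Implicit Defensive.
Import Order.TTheory GRing.Theory Num.Theory.

Definition vec (p : nat) := {ffun 'I_p -> nat}.

Definition vzero p : vec p := [ffun => 0%N].
Definition vadd p (x y : vec p) : vec p := [ffun i => (x i + y i)%N].
Definition vscale p (n : nat) (x : vec p) : vec p := [ffun i => (n * x i)%N].
(* pointwise (truncated) subtraction; only used when y <=_C x, where it is
   the genuine difference *)
Definition vsub p (x y : vec p) : vec p := [ffun i => (x i - y i)%N].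

Definition integer_cone p (C : vec p -> Prop) : Prop :=
  exists (k : nat) (g : 'I_k -> 'I_p -> rat),
    (forall j i, (0 <= g j i)%R) /\
    forall x : vec p, C x <->
      exists lam : 'I_k -> rat, (forall j, (0 <= lam j)%R) /\
        forall i, ((x i)%:R : rat) = (\sum_(j < k) lam j * g j i)%R.

Definition finite_set p (A : vec p -> Prop) : Prop :=
  exists l : seq (vec p), forall x, A x -> x \in l.

Definition hole p (C S : vec p -> Prop) (x : vec p) : Prop := C x /\ ~ S x.

Definition C_semigroup p (C S : vec p -> Prop) : Prop :=
  (forall x, S x -> C x) /\ S (vzero p) /\
  (forall x y, S x -> S y -> S (vadd x y)) /\
  finite_set (hole C S).

Definition monomial_order p (le : rel (vec p)) : Prop :=
  (forall x, le x x) /\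
  (forall x y, le x y -> le y x -> x = y) /\
  (forall x y z, le x y -> le y z -> le x z) /\
  (forall x y, le x y \/ le y x) /\
  (forall x y z, le x y -> le (vadd x z) (vadd y z)) /\
  (forall x, le (vzero p) x).

Definition frobenius p (le : rel (vec p)) (C S : vec p -> Prop) (f : vec p) :=
  hole C S f /\ forall h, hole C S h -> le h f.

Definition pseudo_frobenius p (C S : vec p -> Prop) (y : vec p) : Prop :=
  hole C S y /\ forall s, S s -> s <> vzero p -> S (vadd y s).

Definition irreducible p (le : rel (vec p)) (C S : vec p -> Prop) : Prop :=
  exists f, frobenius le C S f /\
    ((forall y, pseudo_frobenius C S y <-> y = f) \/
     (exists h, vadd h h = f /\
        forall y, pseudo_frobenius C S y <-> (y = f \/ y = h))).

Definition minimal_generator p (S : vec p -> Prop) (x : vec p) : Prop :=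
  S x /\ x <> vzero p /\
  ~ (exists a b, S a /\ S b /\ a <> vzero p /\ b <> vzero p /\ x = vadd a b).

Definition leC p (C : vec p -> Prop) (x y : vec p) : Prop :=
  exists c, C c /\ vadd x c = y.

(* Main.v *)
Require Import Defs.
From mathcomp Require Import all_boot all_order all_algebra.
From mathcomp Require Import zify.
From Stdlib Require Import Classical.
Set Implicit Arguments. Unset Strict Implicit.

Ltac vconv i := repeat match goal with H : _ = _ |- _ =>
  move/ffunP: H => /(_ i); rewrite /vadd /vscale /vsub /vzero ?ffunE /= => H end.
Ltac pw := let i := fresh "i" in apply/ffunP => i; vconv i;
  rewrite /vadd /vscale /vsub /vzero ?ffunE /=; lia.

Lemma cone_add p (C : vec p -> Prop) : integer_cone C ->
  forall a b, C a -> C b -> C (vadd a b).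
Proof.
move=> [k [g [_ HC]]] a b /HC [la [la0 Ha]] /HC [lb [lb0 Hb]]; apply/HC.
exists (fun j => la j + lb j)%R; split => [j|i]; first by rewrite Num.Theory.addr_ge0.
rewrite ffunE GRing.natrD Ha Hb -big_split /=; apply: eq_bigr => j _.
by rewrite GRing.mulrDl.
Qed.

Lemma le_addr p (le : rel (vec p)) : monomial_order le -> forall a t, le a (vadd a t).
Proof.
move=> [_ [_ [_ [_ [ladd l0]]]]] a t.
have := ladd _ _ a (l0 t).
have -> : vadd (vzero p) a = a by pw.
have -> : vadd t a = vadd a t by pw.
done.
Qed.

Lemma count_lt (T : eqType) (a1 a2 : pred T) (l : seq T) z :
  (forall w, a1 w -> a2 w) -> z \in l -> a2 z -> ~~ a1 z ->
  count a1 l < count a2 l.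
Proof.
move=> Hsub; elim: l => //= w l IH; rewrite inE => /orP [/eqP<-|Hz] H2 H1.
  rewrite (negbTE H1) H2 add0n add1n ltnS; exact: sub_count.
have Hw : (a1 w : nat) <= a2 w by case E: (a1 w) => //; rewrite (Hsub _ E).
have := IH Hz H2 H1; lia.
Qed.

Lemma up_PF p (le : rel (vec p)) (C S : vec p -> Prop) (l : seq (vec p)) :
  monomial_order le -> integer_cone C -> C_semigroup C S ->
  (forall x, hole C S x -> x \in l) ->
  forall n h, count (fun z => le h z && (z != h)) l <= n -> hole C S h ->
  exists y s, pseudo_frobenius C S y /\ S s /\ vadd h s = y.
Proof.
move=> Hle HC [SC [S0 [Sadd _]]] Hl.
have Hle' := Hle; move: Hle' => [_ [lanti [ltrans _]]].
elim=> [|n IH] h Hc Hh;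
  (case: (classic (pseudo_frobenius C S h)) => [PF|nPF];
   [exists h, (vzero p); split; [done|split; [done|pw]] |]);
  (have [s [Ss [s0 Nhs]]] : exists s, S s /\ s <> vzero p /\ ~ S (vadd h s)
   by apply: NNPP => N; apply: nPF; split=> // s Ss s0; apply: NNPP => Nhs;
      apply: N; exists s);
  (have hh : hole C S (vadd h s) by split => //; apply: cone_add => //;
     [exact: Hh.1 | exact: SC]);
  (have hne : vadd h s != h by apply/eqP => E; apply: s0; pw);
  (have Hlt : count (fun z => le (vadd h s) z && (z != vadd h s)) l <
              count (fun z => le h z && (z != h)) l
   by apply: (@count_lt _ _ _ l (vadd h s));
   [ move=> w /andP [l1 n1]; apply/andP; split;
     [ exact: ltrans (le_addr Hle h s) l1
     | apply/eqP => E; subst w; move/eqP: hne; apply;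
       apply: lanti => //; exact: le_addr ]
   | exact: Hl
   | by rewrite le_addr // hne
   | by rewrite eqxx andbF ]).
  lia.
have [y [s' [PFy [Ss' E]]]] := IH (vadd h s) (ltac:(lia)) hh.
exists y, (vadd s s'); split=> //; split; first exact: Sadd.
pw.
Qed.

Lemma sym p (le : rel (vec p)) (C S : vec p -> Prop) f :
  monomial_order le -> integer_cone C -> C_semigroup C S ->
  irreducible le C S -> frobenius le C S f ->
  forall h, hole C S h -> (exists s, S s /\ vadd h s = f) \/ vadd h h = f.
Proof.
move=> Hle HC HS [f' [[hf' Hm'] Hcase]] [hf Hm] h Hh.
have Hle' := Hle; move: Hle' => [_ [lanti _]].
have Ef : f' = f by apply: lanti; [exact: Hm|exact: Hm'].
subst f'.
have HS' := HS; move: HS' => [_ [_ [Sadd [l Hl]]]].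
have [y [s [PFy [Ss E]]]] := up_PF Hle HC HS Hl (leqnn _) Hh.
case: Hcase => [Hy|[h0 [Eh0 Hiff]]].
  by left; exists s; rewrite E; split=> //; apply/Hy.
case: (proj1 (Hiff y) PFy) => Ey.
  by left; exists s; rewrite E.
case: (classic (s = vzero p)) => [s0|s0].
  right; pw.
have PF0 : pseudo_frobenius C S h0 by apply/Hiff; right.
left; exists (vadd h0 s); split; first exact: PF0.2.
pw.
Qed.

Theorem mainTheorem9 (p : nat) (le : rel (vec p)) (C S : vec p -> Prop)
  (f x : vec p) :
  monomial_order le ->
  integer_cone C ->
  C_semigroup C S ->
  irreducible le C S ->
  frobenius le C S f ->
  (* x \in I_S(f) *)
  S x -> leC C x f ->
  minimal_generator S x ->
  (* (1) 2x - f \notin S, in Z^p *)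
  ~ (exists s, S s /\ vadd s f = vscale 2 x) ->
  (* (2), (3) *)
  vscale 3 x <> vscale 2 f ->
  vscale 4 x <> vscale 3 f ->
  let S' := fun y => (S y /\ y <> x) \/ y = vsub f x in
  C_semigroup C S' /\ irreducible le C S' /\ frobenius le C S' f.
Proof.
move=> Hle HC HS Hirr Hfrob Sx [c [Cc Hxc]] [_ [x0 xmin]] H1 H2 H3 S'.
have Hsym := sym Hle HC HS Hirr Hfrob.
have HS' := HS; move: HS' => [SC [S0 [Sadd [l Hl]]]].
have Hle' := Hle; move: Hle' => [_ [lanti _]].
have Hfrob' := Hfrob; move: Hfrob' => [[Cf Sf] Hmax].
have Ec : vsub f x = c by pw.
rewrite /S' Ec; clear S'.
pose T := fun y => (S y /\ y <> x) \/ y = c.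
have c0 : c <> vzero p by move=> E; apply: Sf; have -> : f = x by pw.
have Tc : T c by right.
have Tf : ~ T f.
  by case=> [[]//|E]; apply: x0; pw.
have TC : forall y, T y -> C y by move=> y [[Sy _]|->] //; exact: SC.
have Ta : forall a, S a -> a <> x -> a <> vzero p -> T (vadd a c).
  move=> a Sa ax a0; left; split.
    apply: NNPP => Nac.
    have hac : hole C S (vadd a c) by split=> //; apply: cone_add => //; exact: SC.
    case: (Hsym _ hac) => [[s [Ss Es]]|E2].
      case: (classic (s = vzero p)) => [s0|s0].
        by apply: ax; pw.
      apply: xmin; exists a, s; do 4 (split => //); pw.
    apply: H1; exists (vadd a a); split; [exact: Sadd|pw].
  move=> E; apply: H1; exists a; split=> //; pw.
have Tcc : T (vadd c c).
  left; split.
    apply: NNPP => Ncc.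
    have hcc : hole C S (vadd c c) by split=> //; exact: cone_add.
    case: (Hsym _ hcc) => [[s [Ss Es]]|E2].
      by apply: H1; exists s; split=> //; pw.
    by apply: H3; pw.
  by move=> E; apply: H2; pw.
have Tadd : forall a b, T a -> T b -> T (vadd a b).
  move=> a b [[Sa ax]|->] [[Sb bx]|->].
  - left; split; first exact: Sadd.
    case: (classic (a = vzero p)) => [a0|a0].
      by have -> : vadd a b = b by pw.
    case: (classic (b = vzero p)) => [b0|b0].
      by have -> : vadd a b = a by pw.
    move=> E; apply: xmin; exists a, b; do 4 (split => //); by rewrite E.
  - case: (classic (a = vzero p)) => [a0|a0].
      by have -> : vadd a c = c by pw.
    exact: Ta.
  - case: (classic (b = vzero p)) => [b0|b0].
      by have -> : vadd c b = c by pw.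
    have -> : vadd c b = vadd b c by pw.
    exact: Ta.
  - exact: Tcc.
have T0 : T (vzero p) by left; split=> // E; apply: x0.
have lexf : le x f by rewrite -Hxc; exact: le_addr.
have holeT : forall y, hole C T y -> S y -> y = x.
  move=> y [_ Ny] Sy; apply: NNPP => yx; by apply: Ny; left; split.
have frobT : frobenius le C T f.
  split; first by split.
  move=> h [Ch Nh]; case: (classic (S h)) => Sh.
    by rewrite (holeT h (conj Ch Nh) Sh).
  exact: Hmax.
have PFf : pseudo_frobenius C T f.
  split; first by split.
  move=> t Tt t0; left; split.
    apply: NNPP => N.
    have hft : hole C S (vadd f t) by split=> //; apply: cone_add => //; exact: TC.
    apply: t0; have : vadd f t = f by apply: lanti; [exact: Hmax|exact: le_addr].
    move=> E; pw.
  move=> E; apply: t0.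
  have Exf : x = f by apply: lanti => //; rewrite -E; exact: le_addr.
  pw.
have PFchar : forall y, pseudo_frobenius C T y -> y = f \/ vadd y y = f.
  move=> y [[Cy Ny] Hy].
  case: (classic (S y)) => Sy.
    have yx := holeT y (conj Cy Ny) Sy; subst y.
    by exfalso; apply: Tf; rewrite -Hxc; apply: Hy.
  case: (Hsym y (conj Cy Sy)) => [[s [Ss Es]]|]; last by right.
  case: (classic (y = f)) => [->|yf]; first by left.
  exfalso.
  case: (classic (s = vzero p)) => [s0|s0]; first by apply: yf; pw.
  case: (classic (s = x)) => [sx|sx].
    by apply: Ny; right; pw.
  by apply: Tf; rewrite -Es; apply: Hy => //; left.
have CT : C_semigroup C T.
  split=> //; split=> //; split=> //.
  exists (x :: l) => y [Cy Ny]; rewrite inE.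
  case: (classic (S y)) => Sy.
    by rewrite (holeT y (conj Cy Ny) Sy) eqxx.
  by rewrite Hl ?orbT.
split; first exact: CT.
split; last exact: frobT.
exists f; split; first exact: frobT.
case: (classic (exists h, pseudo_frobenius C T h /\ vadd h h = f)) =>
  [[h [PFh Eh]]|Nh].
  right; exists h; split=> // y; split.
    move=> PFy; case: (PFchar y PFy) => [->|Ey]; [by left|right; pw].
  by case=> ->.
left=> y; split; last by move=> ->.
move=> PFy; case: (PFchar y PFy) => // Ey; exfalso; apply: Nh; by exists y.
Qed.
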